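(* Let $a\geq 3$ and $m\geq 2a^2-a+2$ be integers, and suppose $[C(m,a)]$ is colored with red and blue so that there is no monochromatic solution of $L(m,a)$ in $[C(m,a)]$, with both $a-2$ and $a-1$ red. Then $2$ is red.
   Context: For integers $m\geq 3$, $a\geq 1$, $L(m,a)$ denotes the equation $x_1+x_2+\cdots+x_{m-1}=a x_m$. For a positive integer $n$, $[n]=\{1,\dots,n\}$. A solution of $L(m,a)$ in $[n]$ is an $m$-tuple $(x_1,\dots,x_m)\in[n]^m$ (entries not necessarily distinct) satisfying the equation; given a 2-coloring of $[n]$, it is monochromatic if all $x_i$ have the same color. $C(m,a)$ denotes $\left\lceil \frac{m-1}{a}\left\lceil \frac{m-1}{a}\right\rceil\right\rceil$. *)

(* Defs.v *)
From mathcomp Require Import all_boot.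
Unset Printing Implicit Defensive.

Definition ceil_div (p q : nat) : nat := (p + q - 1) %/ q.

Definition Cma (m a : nat) : nat := ceil_div ((m - 1) * ceil_div (m - 1) a) a.

(* A 2-coloring of [n]: col : nat -> bool (true = red, false = blue);
   only its values on [n] matter. *)

(* A solution of L(m,a) in [n]: (x_1..x_{m-1}) given by y : 'I_(m-1) -> nat,
   and x_m = z, with all entries in [1,n]. *)
Definition is_solution (m a n : nat) (y : 'I_(m - 1) -> nat) (z : nat) : Prop :=
  (forall i, 1 <= y i <= n) /\ 1 <= z <= n /\
  \sum_(i < m - 1) y i = a * z.

Definition monochromatic (m : nat) (col : nat -> bool)
    (y : 'I_(m - 1) -> nat) (z : nat) : Prop :=
  forall i, col (y i) = col z.

Definition no_mono_solution (m a n : nat) (col : nat -> bool) : Prop :=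
  forall (y : 'I_(m - 1) -> nat) (z : nat),
    @is_solution m a n y z -> ~ @monochromatic m col y z.

(* Main.v *)
Require Import Defs.
From mathcomp Require Import all_boot zify.

Lemma sum_step n t A B : t <= n ->
  \sum_(i < n) (if i < t then A else B) = t*A + (n-t)*B.
Proof.
move=> tn.
rewrite -(big_mkord xpredT (fun i => if i < t then A else B)).
rewrite (@big_cat_nat _ _ _ t 0 n _ _ (leq0n t) tn) /=.
rewrite (@eq_big_nat _ _ _ 0 t _ (fun _ => A)); last by move=> i /andP[_ ->].
rewrite (@eq_big_nat _ _ _ t n _ (fun _ => B)); last by move=> i /andP[H _]; rewrite ltnNge H.
by rewrite !sum_nat_const_nat subn0.
Qed.

Lemma kC m a : 0 < a -> a * a <= m - 1 -> m - 1 <= Cma m a.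
Proof.
move=> a0 ha; rewrite /Cma /ceil_div.
set k := m - 1.
have hc : a <= (k + a - 1) %/ a.
  by rewrite leq_divRL //; lia.
have : k * a <= k * ((k + a - 1) %/ a) + a - 1.
  have := leq_mul (leqnn k) hc; lia.
move/(leq_div2r a); rewrite mulnK //.
Qed.

Theorem lemma6 (m a : nat) (col : nat -> bool) :
  3 <= a ->
  2 * a ^ 2 - a + 2 <= m ->
  no_mono_solution m a (Cma m a) col ->
  col (a - 2) = true ->
  col (a - 1) = true ->
  col 2 = true.
Proof.
move=> a3 hm hno h2 h1.
case: (ltngtP a 4) => [a4|a4|a4]; last by rewrite a4 in h2.
  have e3 : a = 3 by lia. by rewrite e3 in h1.
case c2: (col 2) => //; exfalso.
set k := m - 1.
have hk : 2 * a * a - a + 1 <= k.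
  rewrite /k; move: hm; rewrite expnS expn1; lia.
have hkC : k <= Cma m a by apply: kC; nia.
have blue : forall w, k * (a - 2) <= a * w <= k * (a - 1) -> col w = false.
  move=> w /andP[lw uw].
  case cw: (col w) => //.
  set t := a * w - k * (a - 2).
  have tk : t <= k by rewrite /t; nia.
  exfalso; refine (hno (fun i : 'I_(m - 1) => if i < t then a - 1 else a - 2) w _ _).
  - split; [|split].
    + move=> i; case: ifP => _; apply/andP; split; lia.
    + apply/andP; split; nia.
    + rewrite (sum_step _ _ _ _ tk); rewrite /t; nia.
  - by rewrite /monochromatic cw => i; case: ifP.
have [b eb] : exists b, a = b + 5 by exists (a - 5); lia.
subst a.
have e1 : b + 5 - 1 = b + 4 by lia.
have e2 : b + 5 - 2 = b + 3 by lia.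
rewrite e1 e2 in blue hkC hk h1 h2 hno *.
clear a3 a4 hm.
set U := k * (b + 4) %/ (b + 5).
have hU := divn_eq (k * (b + 4)) (b + 5).
have b50 : 0 < b + 5 by lia.
have hr := ltn_pmod (k * (b + 4)) b50.
rewrite -/U in hU.
set r := k * (b + 4) %% (b + 5) in hU hr.
have P25 : 25 + 10 * b <= (b + 5) * (b + 5) by nia.
have hk2 : (b + 5) * (b + 5) + b + 5 <= k by move: hk; rewrite -mulnA; lia.
clear hk.
have kb : b + 3 <= k by lia.
set K := k - (b + 3).
have eK : k = K + (b + 3) by rewrite /K; lia.
clearbody K.
have kb4 : k * (b + 4) = k * b + 4 * k by nia.
have Wge : 2 * K <= (b + 5) * U by rewrite mulnC; lia.
set W := (b + 5) * U - 2 * K.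
have eW : W + 2 * K = (b + 5) * U by rewrite /W; lia.
clearbody W.
have UK : U <= K.
  have : U * (b + 5) <= K * (b + 5) by nia.
  rewrite leq_pmul2r //; lia.
have WU : W <= U * (b + 3).
  have : (b + 5) * U = U * (b + 3) + 2 * U by nia.
  lia.
set q := W %/ (b + 3).
have hW := divn_eq W (b + 3).
have b30 : 0 < b + 3 by lia.
have hs := ltn_pmod W b30.
set s := W %% (b + 3) in hW hs.
rewrite -/q in hW.
clearbody q s.
have qU : q <= U.
  have : q * (b + 3) <= U * (b + 3) by lia.
  rewrite leq_pmul2r //; lia.
have qU1 : 0 < s -> q < U.
  move=> s0; rewrite ltnNge; apply/negP => Uq.
  have := leq_mul Uq (leqnn (b + 3)); lia.
have aUhi : (b + 5) * U <= k * (b + 4) by rewrite hU mulnC; lia.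
have kb3 : k * (b + 3) = k * b + 3 * k by nia.
have aUlo : k * (b + 3) <= (b + 5) * U by rewrite mulnC; lia.
have kb2 : k * (b + 2) = k * b + 2 * k by nia.
have g1 : k * (b + 2) <= q * (b + 3).
  have : (b + 5) * U + r = k * b + 4 * k by rewrite -kb4 hU mulnC.
  lia.
have qlo : k * (b + 3) <= (b + 5) * q.
  have j1 : (b + 5) * (k * (b + 2)) <= (b + 5) * (q * (b + 3)) by apply: leq_mul.
  have e : (b + 5) * (k * (b + 2)) = (b + 3) * (k * (b + 3)) + k * (b + 1) by nia.
  have j3 : (b + 3) * ((b + 5) * q) = (b + 5) * (q * (b + 3)) by nia.
  have : (b + 3) * (k * (b + 3)) <= (b + 3) * ((b + 5) * q) by lia.
  rewrite leq_pmul2l //; lia.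
have cU : col U = false by apply: blue; rewrite aUlo aUhi.
have cq : col q = false.
  apply: blue; rewrite qlo /=; apply: leq_trans aUhi; by rewrite leq_mul2l qU orbT.
have cq1 : 0 < s -> col (q + 1) = false.
  move=> s0; apply: blue; apply/andP; split.
    apply: (leq_trans qlo); by rewrite leq_mul2l addn1 leqnSn orbT.
  apply: leq_trans aUhi; by rewrite leq_mul2l addn1 qU1 ?orbT.
have q1 : 0 < q.
  rewrite lt0n; apply/eqP => q0; move: qlo; rewrite q0 muln0; lia.
have UK2 : U <= k by lia.
have sk : s <= k by lia.
have bk : b + 3 <= k by lia.
apply: (hno (fun i : 'I_(m - 1) => (if i < s then 1 else 0) + (if i < b + 3 then q else 2)) U).
- split; [|split].
  + move=> i; apply/andP; split.
      case: ifP => _; case: ifP => _; lia.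
    apply: leq_trans hkC.
    case: ifP => his; case: ifP => hib; try lia.
  + apply/andP; split; lia.
  + rewrite big_split /= (sum_step _ _ _ _ sk) (sum_step _ _ _ _ bk).
    rewrite -eW hW [q * _]mulnC; lia.
- move=> i /=; rewrite cU.
  case: ifP => his; case: ifP => hib.
  + by rewrite add1n -addn1 cq1 // (leq_ltn_trans (leq0n _) his).
  + lia.
  + by rewrite add0n.
  + by rewrite add0n.
Qed.
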